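(* Let $p$ be a prime and $(r,e,d)\in\mathscr{D}(p)$. Then $\det M_d(f(x)^e)$ is divisible by $\delta(x_1,\ldots,x_r)^{2e-(p-1)}$ in $\mathbb{F}_p[x_1,\ldots,x_r]$.
   Context: $\mathscr{D}(p)$ is the set of integer triples $(r,e,d)$ with $r\ge2$, $\frac{p-1}{2}<e\le p-1$, $1\le d\le p$, and $d(p-1)\le re\le(d+1)(p-1)$. Let $x_1,\ldots,x_r$ be independent indeterminates over $\mathbb{F}_p$, $f(x)=(x-x_1)\cdots(x-x_r)$, write $f(x)^e=\sum_{i\ge0}c_ix^i$ ($c_i=0$ for $i<0$), and let $M_d(f(x)^e)$ be the $d\times d$ matrix with $(i,j)$ entry $c_{ip+j-d-1}$. Put $\delta(x_1,\ldots,x_r)=\prod_{1\le i<j\le r}(x_i-x_j)$. *)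

(* Defs.v *)
From HB Require Import structures.
From mathcomp Require Import all_boot all_order all_algebra.
From mathcomp Require Import multinomials.mpoly.
Set Implicit Arguments. Unset Strict Implicit. Unset Printing Implicit Defensive.
Import GRing.Theory.
Local Open Scope ring_scope.

(* The set D(p) of triples (r, e, d). (p-1)/2 < e is written p-1 < 2e. *)
Definition inD (p r e d : nat) : Prop :=
  [/\ (2 <= r)%N, (p.-1 < 2 * e)%N, (e <= p.-1)%N, (1 <= d <= p)%N
    & (d * p.-1 <= r * e <= d.+1 * p.-1)%N].

Definition fpoly (p r : nat) : {poly {mpoly 'F_p[r]}} :=
  \prod_(i < r) ('X - ('X_i : {mpoly 'F_p[r]})%:P).

Definition coefz (R : nzRingType) (g : {poly R}) (k : int) : R :=
  match k with Posz n => g`_n | Negz _ => 0 end.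

(* M_d(g): d x d matrix whose (i,j) entry (1-based) is c_{ip+j-d-1};
   with 0-based indices i', j' this is c_{(i'+1)p + (j'+1) - d - 1}. *)
Definition Md (R : nzRingType) (p d : nat) (g : {poly R}) : 'M[R]_d :=
  \matrix_(i < d, j < d)
     coefz g ((i.+1 * p)%N%:Z + (j.+1)%N%:Z - d%:Z - 1).

Definition delta (p r : nat) : {mpoly 'F_p[r]} :=
  \prod_(i < r) \prod_(j < r | (i < j)%N) ('X_i - 'X_j).

(* Main.v *)
Require Import Defs.
From HB Require Import structures.
From mathcomp Require Import all_boot all_order all_algebra.
From mathcomp Require Import multinomials.mpoly.
From mathcomp Require Import zify ring.
Set Implicit Arguments. Unset Strict Implicit. Unset Printing Implicit Defensive.
Import GRing.Theory.
Local Open Scope ring_scope.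
Lemma binsplit (S : comNzRingType) (Y c : S) n j :
  exists A B, (Y + c) ^+ n = Y ^+ (n - j) * A + c ^+ j.+1 * B.
Proof.
elim: n j => [|n IH] j.
  by exists 1, 0; rewrite sub0n !mulr1 mulr0 addr0.
have [lenj|ltjn] := leqP n.+1 j.
  exists ((Y + c) ^+ n.+1), 0.
  by rewrite (eqP (_ : n.+1 - j == 0)%N) ?subn_eq0 // mul1r mulr0 addr0.
case: j ltjn => [|j] ltjn.
  have [A [B E]] := IH 0%N.
  exists A, (Y * B + (Y + c) ^+ n).
  rewrite subn0 in E; rewrite subn0 exprS E [Y ^+ n.+1]exprS; move: (Y ^+ n) => Z; ring.
have [A1 [B1 E1]] := IH j.+1.
have [A2 [B2 E2]] := IH j.
exists (A1 + c * A2), (Y * B1 + B2).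
have h1 : (n.+1 - j.+1 = (n - j.+1).+1)%N by lia.
have h2 : (n - j = (n - j.+1).+1)%N by lia.
rewrite h2 in E2; rewrite h1 exprS mulrDl {1}E1 E2 !exprS.
move: (Y ^+ (n - j.+1)) (c ^+ j) => Z C; ring.
Qed.
Section Lf.
Variable R : comNzRingType.

Definition Lf (p N : nat) (a : R) (u : {poly R}) :=
  \sum_(q < N) a ^+ (p * q) * u`_(q * p + p.-1).

Lemma Lf_add p N a u v : Lf p N a (u + v) = Lf p N a u + Lf p N a v.
Proof. by rewrite /Lf -big_split; apply: eq_bigr => q _; rewrite coefD mulrDr. Qed.

Lemma Lf_scal p N a t v : Lf p N a (t%:P * v) = t * Lf p N a v.
Proof. by rewrite /Lf big_distrr; apply: eq_bigr => q _; rewrite coefCM mulrCA. Qed.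

Lemma Lf_frob p N a (V : {poly R}) : (0 < p)%N ->
  Lf p N.+1 a (('X^p - (a ^+ p)%:P) * V) = - (a ^+ (p * N.+1) * V`_((N.+1 * p).-1)).
Proof.
move=> p0; elim: N => [|N IH].
  rewrite /Lf big_ord1 /= mulrBl coefB coefXnM coefCM.
  rewrite (_ : (0 * p + p.-1 < p)%N) ?muln0 ?mul0n ?add0n ?expr0 ?mul1n ?muln1 ?mul1r//; last by lia.
  by rewrite sub0r.
rewrite /Lf big_ord_recr /= -/(Lf p N.+1 a _) IH.
rewrite mulrBl coefB coefXnM coefCM.
rewrite (_ : (N.+1 * p + p.-1 < p)%N = false); last by lia.
rewrite (_ : (N.+1 * p + p.-1 - p = (N.+1 * p).-1)%N); last by lia.
rewrite (_ : (N.+1 * p + p.-1 = (N.+2 * p).-1)%N); last by lia.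
rewrite mulrBr mulrA -exprD (_ : (p * N.+1 + p = p * N.+2)%N); last by lia.
ring.
Qed.

Lemma Lf_frob0 p N a (V : {poly R}) : (0 < p)%N -> (size V <= (N.+1 * p).-1)%N ->
  Lf p N.+1 a (('X^p - (a ^+ p)%:P) * V) = 0.
Proof.
by move=> p0 sV; rewrite Lf_frob // nth_default // mulr0 oppr0.
Qed.

Lemma Lf_widen p N M a (u : {poly R}) : (0 < p)%N -> (N <= M)%N -> (size u <= N * p + p.-1)%N ->
  Lf p M a u = Lf p N a u.
Proof.
move=> p0 NM su; rewrite /Lf (big_ord_widen _ (fun q => a ^+ (p * q) * u`_(q * p + p.-1)) NM).
rewrite [RHS]big_mkcond /=; apply: eq_bigr => q _.
case: ifP => // /negbT; rewrite -leqNgt => Nq.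
rewrite nth_default ?mulr0 //.
apply: (leq_trans su); rewrite leq_add2r leq_mul2r Nq orbT //.
Qed.

End Lf.

Lemma frobX (R : comNzRingType) p (a : R) : p \in [pchar R] ->
  ('X - a%:P) ^+ p = 'X^p - (a ^+ p)%:P.
Proof.
move=> pc; have pcP : p \in [pchar {poly R}] by rewrite pchar_poly.
have cm : GRing.comm ('X : {poly R}) a%:P by exact: mulrC.
have := pFrobenius_autB_comm pcP cm.
rewrite !pFrobenius_autE => ->; by rewrite rmorphXn.
Qed.

Lemma decomp (R : comNzRingType) p e (a b : R) (W : {poly R}) :
  p \in [pchar R] -> (p <= 2 * e)%N -> (e <= p)%N ->
  exists V U, W * (('X - a%:P) ^+ e * ('X - b%:P) ^+ e) =
     ('X^p - (a ^+ p)%:P) * V + ((a - b) ^+ (2 * e - p).+1)%:P * U.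
Proof.
move=> pc p2e ep.
set Y := 'X - a%:P; set c := (a - b)%:P.
have Yc : 'X - b%:P = Y + c by rewrite /Y /c polyCB; ring.
have [A [B E]] := binsplit Y c e (2 * e - p).
exists (W * A), (W * Y ^+ e * B).
rewrite Yc E -(frobX a pc) rmorphXn -/c.
have -> : Y ^+ p = Y ^+ e * Y ^+ (e - (2 * e - p)) by rewrite -exprD; congr (_ ^+ _); lia.
move: (Y ^+ e) (Y ^+ (e - (2 * e - p))) (c ^+ (2 * e - p).+1) => Z1 Z2 C; ring.
Qed.
Definition dv (S : comNzRingType) (x y : S) := exists q, y = q * x.

Lemma dv0 (S : comNzRingType) (x : S) : dv x 0.
Proof. by exists 0; rewrite mul0r. Qed.

Lemma dvD (S : comNzRingType) (x y z : S) : dv x y -> dv x z -> dv x (y + z).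
Proof. by move=> [a ->] [b ->]; exists (a + b); rewrite mulrDl. Qed.

Lemma dvM (S : comNzRingType) (x y z : S) : dv x y -> dv x (z * y).
Proof. by move=> [a ->]; exists (z * a); rewrite mulrA. Qed.

Lemma dv_prod (S : comNzRingType) (x : S) (I : Type) (s : seq I) (F G : I -> S) :
  (forall i, dv x (F i - G i)) -> dv x (\prod_(i <- s) F i - \prod_(i <- s) G i).
Proof.
move=> H; elim/big_rec2: _ => [|i y1 y2 _ [q Eq]]; first by rewrite subrr; exact: dv0.
have -> : F i * y2 - G i * y1 = F i * (y2 - y1) + (F i - G i) * y1 by ring.
rewrite Eq; apply: dvD; first by apply: dvM; exists q.
by rewrite mulrC; apply: dvM; apply: H.
Qed.

Lemma dvX (S : comNzRingType) (l x y : S) k : dv l (x - y) -> dv l (x ^+ k - y ^+ k).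
Proof.
move=> [q E]; elim: k => [|k [q' E']]; first by rewrite subrr; exact: dv0.
have -> : x ^+ k.+1 - y ^+ k.+1 = x * (x ^+ k - y ^+ k) + (x - y) * y ^+ k.
  by rewrite !exprS; ring.
rewrite E E'; exists (x * q' + q * y ^+ k); ring.
Qed.

Section Subst.
Variables (n : nat) (F : fieldType) (i j : 'I_n).
Hypothesis ij : i != j.

Definition rho (l : 'I_n) := if l == i then j else l.
Definition lq : n.-tuple {mpoly F[n]} := [tuple 'X_(rho l) | l < n].
Definition sig (P : {mpoly F[n]}) := P \mPo lq.
Definition ell : {mpoly F[n]} := 'X_i - 'X_j.

Lemma sigX l : sig 'X_l = 'X_(rho l).
Proof. by rewrite /sig comp_mpolyXU -tnth_nth tnth_mktuple. Qed.

Lemma dv_sig P : dv ell (P - sig P).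
Proof.
elim/mpolyind: P => [|c m P _ _ IH]; first by rewrite /sig comp_mpoly0 subr0; exact: dv0.
rewrite /sig comp_mpolyD comp_mpolyZ -/(sig P).
have -> : c *: 'X_[m] + P - (c *: ('X_[m] \mPo lq) + sig P) =
   c%:MP * ('X_[m] - ('X_[m] \mPo lq)) + (P - sig P).
  by rewrite -!mul_mpolyC; ring.
apply: dvD => //; apply: dvM.
rewrite comp_mpolyX [X in X - _]mpolyXE_id; apply: dv_prod => l; apply: dvX.
rewrite tnth_mktuple /rho; case: eqP => [->|_]; first by exists 1; rewrite mul1r.
by rewrite subrr; exact: dv0.
Qed.

Lemma sig_ell : sig ell = 0.
Proof.
have ji : (j == i) = false by apply/negbTE; rewrite eq_sym.
by rewrite /ell /sig comp_mpolyB; have := sigX i; have := sigX j; rewrite /sig /rho eqxx ji => -> ->; rewrite subrr.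
Qed.

Lemma dv_sig0 P : dv ell P -> sig P = 0.
Proof. by move=> [q ->]; rewrite /sig rmorphM /= -/(sig ell) sig_ell mulr0. Qed.

Lemma sig0_dv P : sig P = 0 -> dv ell P.
Proof. by move=> H; have := dv_sig P; rewrite H subr0. Qed.

End Subst.

Lemma X_inj n (F : fieldType) (a b : 'I_n) : ('X_a : {mpoly F[n]}) = 'X_b -> a = b.
Proof.
move=> E; have := congr1 (mcoeff U_(a)) E; rewrite !mcoeffXU eqxx.
by case: eqP => // _ /eqP; rewrite oner_eq0.
Qed.

Lemma ell_neq0 n (F : fieldType) (i j : 'I_n) : i != j -> ell F i j != 0.
Proof. by move=> ij; rewrite /ell subr_eq0; apply: contra ij => /eqP/X_inj ->. Qed.

Lemma dv_cancel n (F : fieldType) (i j : 'I_n) k (Q T : {mpoly F[n]}) : i != j ->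
  sig i j T != 0 -> dv (ell F i j ^+ k) (Q * T) -> dv (ell F i j ^+ k) Q.
Proof.
move=> ij nzT; elim: k Q => [|k IH] Q H; first by exists Q; rewrite expr0 mulr1.
case: H => z Hz.
have : sig i j (Q * T) = 0.
  by apply: dv_sig0 => //; exists (z * ell F i j ^+ k); rewrite Hz exprSr mulrA.
rewrite /sig rmorphM /= -!/(sig _ _ _) => /eqP; rewrite mulf_eq0 (negbTE nzT) orbF => /eqP.
move=> /sig0_dv [Q1 EQ1].
have : dv (ell F i j ^+ k) Q1.
  apply: IH; exists z; apply: (mulIf (ell_neq0 F ij)).
  by rewrite -mulrA (mulrC T) mulrA -EQ1 Hz exprSr mulrA.
by case=> w Ew; exists w; rewrite EQ1 Ew exprSr mulrA.
Qed.

Lemma sig_ell_neq0 n (F : fieldType) (i j a b : 'I_n) :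
  (i < j)%N -> (a < b)%N -> (a, b) != (i, j) -> sig i j (ell F a b) != 0.
Proof.
move=> lij lab ne; rewrite /ell /sig comp_mpolyB -!/(sig _ _ _) !sigX subr_eq0.
apply/negP => /eqP /X_inj; rewrite /rho.
case: (a =P i) => [ai|ai]; case: (b =P i) => [bi|bi] E.
- by move: lab; rewrite ai bi ltnn.
- by move: ne; rewrite ai -E eqxx.
- by move: lab lij; rewrite -E bi; lia.
- by move: lab; rewrite E ltnn.
Qed.

Lemma combine n (F : fieldType) (k : nat) (P : {mpoly F[n]}) (s : seq ('I_n * 'I_n)) :
  uniq s -> all (fun x : 'I_n * 'I_n => (x.1 < x.2)%N) s ->
  (forall x, x \in s -> dv (ell F x.1 x.2 ^+ k) P) ->
  dv (\prod_(x <- s) ell F x.1 x.2 ^+ k) P.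
Proof.
elim: s => [|x s IH] /=; first by move=> _ _ _; exists P; rewrite big_nil mulr1.
move=> /andP [xs us] /andP [lx ss] H.
have [Q EQ] := IH us ss (fun y ys => H y (mem_behead (s := x :: s) ys)).
have Hx := H x (mem_head x s).
rewrite EQ in Hx.
have ij : x.1 != x.2 by rewrite neq_ltn lx.
have nz : sig x.1 x.2 (\prod_(y <- s) ell F y.1 y.2 ^+ k) != 0.
  rewrite /sig rmorph_prod /= prodf_seq_neq0; apply/allP => y ys /=.
  rewrite rmorphXn /= expf_neq0 // -/(sig _ _ _) sig_ell_neq0 //.
    by move/allP: ss => /(_ y ys).
  apply: contraNneq xs => E; suff -> : x = y by [].
  by move: E; case: x {H Hx lx ij} => ? ?; case: y {ys} => ? ? /= [-> ->].
have [w Ew] := dv_cancel ij nz Hx.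
by exists w; rewrite EQ Ew big_cons mulrA.
Qed.

Section Main.
Variables (p r e d : nat).
Hypothesis pp : prime p.
Hypothesis hD : inD p r e d.
Local Notation R := {mpoly 'F_p[r]}.

Lemma pcR : p \in [pchar R].
Proof. exact: (rmorph_pchar (@mpolyC r 'F_p) (pchar_Fp pp)). Qed.

Lemma size_fpoly : size (fpoly p r) = r.+1.
Proof. by rewrite /fpoly size_prod_XsubC [index_enum _]unlock -enumT size_enum_ord. Qed.

Lemma fsplit (i0 j0 : 'I_r) : i0 != j0 ->
  exists g, fpoly p r ^+ e = (('X - ('X_i0)%:P) ^+ e * ('X - ('X_j0)%:P) ^+ e) * g.
Proof.
move=> ij; rewrite /fpoly (bigD1 i0) //= (bigD1 j0) /=; last by rewrite eq_sym.
by eexists; rewrite !exprMn mulrA.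
Qed.

Lemma col_dv (i0 j0 : 'I_r) (j : 'I_d) : i0 != j0 ->
  exists s, \sum_(q < d) ('X_i0 : R) ^+ (p * q) * (Md p d (fpoly p r ^+ e)) q j
     = s * ('X_i0 - 'X_j0) ^+ (2 * e - p.-1).
Proof.
move=> ij; case: hD => hr hlt hle /andP [d1 dp] /andP [_ hre].
have p2 := prime_gt1 pp.
have jd := ltn_ord j.
set h := fpoly p r ^+ e; set a : R := 'X_i0; set b : R := 'X_j0.
set u := 'X^(d.-1 - j) * h.
have E1 : \sum_(q < d) a ^+ (p * q) * (Md p d h) q j = Lf p d a u.
  rewrite /Lf; apply: eq_bigr => q _; rewrite mxE; congr (_ * _).
  rewrite coefXnM ifF; last by apply/negbTE; rewrite -leqNgt; lia.
  have -> : ((q.+1 * p)%N%:Z + (j.+1)%N%:Z - d%:Z - 1)%R = (q * p + p.-1 - (d.-1 - j))%N%:Z.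
    lia.
  by [].
have su : (size u <= d * p + p.-1)%N.
  apply: (leq_trans (size_mul_leq _ _)); rewrite size_polyXn.
  have := size_poly_exp_leq (fpoly p r) e; rewrite size_fpoly -/h /= => sh.
  have f1 : (d * p = d * p.-1 + d)%N by rewrite -mulnSr prednK // ltnW.
  have f2 : (d.+1 * p.-1 = d * p.-1 + p.-1)%N by rewrite mulSn addnC.
  lia.
have [g Hg] := fsplit ij.
have p2e : (p <= 2 * e)%N by lia.
have ep : (e <= p)%N by lia.
have [V [U EU]] := decomp a b ('X^(d.-1 - j) * g) pcR p2e ep.
have Eu : u = 'X^(d.-1 - j) * g * (('X - a%:P) ^+ e * ('X - b%:P) ^+ e).
  rewrite /u /h Hg (mulrC _ g); exact: mulrA.
have hV : (size V <= ((d + size V).+1 * p).-1)%N.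
  have : ((d + size V).+1 * 2 <= (d + size V).+1 * p)%N by rewrite leq_mul2l p2 orbT.
  lia.
have p0 : (0 < p)%N by lia.
exists (Lf p (d + size V).+1 a U).
rewrite E1 -(@Lf_widen _ p d (d + size V).+1 a u) //; try lia.
rewrite Eu EU Lf_add (Lf_frob0 _ p0 hV) add0r.
rewrite (Lf_scal (R := R)).
rewrite mulrC; congr (_ * _ ^+ _); lia.
Qed.

Lemma pair_dv (i0 j0 : 'I_r) : i0 != j0 ->
  dv (('X_i0 - 'X_j0 : R) ^+ (2 * e - p.-1)) (\det (Md p d (fpoly p r ^+ e))).
Proof.
move=> ij.
have [s Hs] := fin_all_exists (fun j : 'I_d => col_dv j ij).
have d1 : (0 < d)%N by case: hD => _ _ _ /andP [].
pose i00 : 'I_d := Ordinal d1.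
set A := Md p d (fpoly p r ^+ e).
pose E : 'M[R]_d := \matrix_(q, l) (if q == i00 then ('X_i0 : R) ^+ (p * l) else (q == l)%:R).
have dE : \det E = 1.
  rewrite -det_tr det_trig; last first.
    apply/is_trig_mxP => q l lt; rewrite !mxE.
    have -> : (l == i00) = false by apply/negbTE; rewrite -val_eqE /= -lt0n; lia.
    by rewrite (_ : (l == q) = false) // ; apply/negbTE; rewrite -val_eqE /= gtn_eqF.
  apply: big1 => q _; rewrite !mxE; case: eqP => [->|]; last by rewrite eqxx.
  by rewrite /= muln0 expr0.
rewrite -[\det A]mul1r -dE -det_mulmx (expand_det_row _ i00).
exists (\sum_j s j * cofactor (E *m A) i00 j).
rewrite big_distrl /=; apply: eq_bigr => j _.
rewrite mxE (_ : \sum_q E i00 q * A q j = \sum_(q < d) ('X_i0 : R) ^+ (p * q) * A q j).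
  by rewrite Hs mulrAC.
by apply: eq_bigr => q _; rewrite mxE eqxx.
Qed.
End Main.

Unset Implicit Arguments.

Theorem lemma2 (p r e d : nat) :
  prime p -> inD p r e d ->
  exists q : {mpoly 'F_p[r]},
    \det (Md p d (fpoly p r ^+ e)) = q * delta p r ^+ (2 * e - p.-1)%N.
Proof.
move=> pp hD.
set k := (2 * e - p.-1)%N.
pose s := [seq x <- index_enum ('I_r * 'I_r)%type | (fun x : 'I_r * 'I_r => (x.1 < x.2)%N) x].
have Hdelta : delta p r ^+ k = \prod_(x <- s) ell 'F_p x.1 x.2 ^+ k.
  rewrite /delta /ell pair_big_dep /= /s big_filter prodrXl.
  by congr (_ ^+ _); apply: eq_bigl => x.
have us : uniq s by rewrite filter_uniq // index_enum_uniq.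
have as_ : all (fun x : 'I_r * 'I_r => (x.1 < x.2)%N) s by apply: filter_all.
have H : forall x, x \in s -> dv (ell 'F_p x.1 x.2 ^+ k) (\det (Md p d (fpoly p r ^+ e))).
  move=> x; rewrite mem_filter => /andP [lt _].
  by apply: pair_dv => //; rewrite neq_ltn lt.
have [q Eq] := combine us as_ H.
by exists q; rewrite Hdelta.
Qed.
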